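(* The space $\overline{ARI}_{circneut}$ of circ-neutral moulds in $\overline{ARI}$ is closed under the $\overline{ari}$-bracket, hence forms a Lie algebra under it.
   Context: $\overline{ARI}$ is the space of moulds $A=(A^r)_{r\ge0}$ with $A^r\in\mathbb{Q}(v_1,\dots,v_r)$ and $A^0=0$. $A$ is circ-neutral if $\sum_{i=0}^{r-1}A(v_{i+1},\dots,v_r,v_1,\dots,v_i)=0$ for all $r>1$. For $A,B\in\overline{ARI}$ and $w=(v_1,\dots,v_r)$: $mu(A,B)(w)=\sum_{i=0}^rA(v_1,\dots,v_i)B(v_{i+1},\dots,v_r)$, $lu(A,B)=mu(A,B)-mu(B,A)$; $(\overline{amit}(B)\cdot A)(w)=\sum_{0\le i<j<r}A(v_1,\dots,v_i,v_{j+1},\dots,v_r)B(v_{i+1}-v_{j+1},\dots,v_j-v_{j+1})$; $(\overline{anit}(B)\cdot A)(w)=\sum_{1\le i<j\le r}A(v_1,\dots,v_i,v_{j+1},\dots,v_r)B(v_{i+1}-v_i,\dots,v_j-v_i)$; $\overline{arit}(B)=\overline{amit}(B)-\overline{anit}(B)$; and $\overline{ari}(A,B)=\overline{arit}(B)\cdot A-\overline{arit}(A)\cdot B+lu(A,B)$. *)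

(* Defs.v *)
From HB Require Import structures.
From mathcomp Require Import all_boot all_order all_algebra.
From mathcomp Require Import fraction generic_quotient.
From mathcomp Require Import mpoly.
Set Implicit Arguments. Unset Strict Implicit. Unset Printing Implicit Defensive.
Import Order.TTheory GRing.Theory Num.Theory.
Local Open Scope ring_scope.

(** Polynomials and rational functions in r variables v_1, ..., v_r over Q.
    The variable v_(m+1) is ''X_m (0-based indexing). *)
Definition Poly (r : nat) := {mpoly rat[r]}.
Definition RatFun (r : nat) := {fraction {mpoly rat[r]}}.

Definition mould := forall r : nat, RatFun r.

(** The (0-based) variable v_(j+1) in Q[v_1..v_r] (0 if out of range). *)
Definition var (r j : nat) : Poly r :=
  match (insub j : option 'I_r) with
  | Some i => 'X_i
  | None => 0
  end.

(** Substitution of a rational function in k variables: the m-th variable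
    (0-based, i.e. u_(m+1)) is replaced by the polynomial f m in r variables.
    (Computed on a representative numerator/denominator; all substitutions used
    below are injective on polynomials, so this is the usual field embedding.) *)
Definition subst (k r : nat) (f : nat -> Poly r) (x : RatFun k) : RatFun r :=
  let lq := [tuple f (nat_of_ord m) | m < k] in
  let p := @frac _ (repr x) in
  tofrac (comp_mpoly lq p.1) / tofrac (comp_mpoly lq p.2).

Definition in_ARI (A : mould) : Prop := A 0%N = 0.

Definition circ_neutral (A : mould) : Prop :=
  forall r : nat, (1 < r)%N ->
    \sum_(i < r) subst (fun m => var r ((m + i) %% r)) (A r) = 0.

(** mu(A,B)(w) = sum_{i=0}^r A(v_1..v_i) B(v_{i+1}..v_r). *)
Definition mu (A B : mould) : mould := fun r =>
  \sum_(i < r.+1)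
     subst (fun m => var r m) (A i) * subst (fun m => var r (i + m)) (B (r - i)%N).

Definition lu (A B : mould) : mould := fun r => mu A B r - mu B A r.

(** (amit(B).A)(w) = sum_{0<=i<j<r} A(v_1..v_i,v_{j+1}..v_r) B(v_{i+1}-v_{j+1},..,v_j-v_{j+1}). *)
Definition amit (B A : mould) : mould := fun r =>
  \sum_(j < r) \sum_(i < j)
     subst (fun m => if (m < i)%N then var r m else var r (j + (m - i))) (A (r - (j - i))%N)
   * subst (fun m => var r (i + m) - var r j) (B (j - i)%N).

(** (anit(B).A)(w) = sum_{1<=i<j<=r} A(v_1..v_i,v_{j+1}..v_r) B(v_{i+1}-v_i,..,v_j-v_i). *)
Definition anit (B A : mould) : mould := fun r =>
  \sum_(j < r.+1) \sum_(i < j | (0 < i)%N)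
     subst (fun m => if (m < i)%N then var r m else var r (j + (m - i))) (A (r - (j - i))%N)
   * subst (fun m => var r (i + m) - var r (i.-1)) (B (j - i)%N).

Definition arit (B A : mould) : mould := fun r => amit B A r - anit B A r.

Definition ari (A B : mould) : mould := fun r => arit B A r - arit A B r + lu A B r.

(* Main.v *)
Require Import Defs.
From HB Require Import structures.
From mathcomp Require Import all_boot all_order all_algebra.
From mathcomp Require Import fraction generic_quotient.
From mathcomp Require Import mpoly.
From mathcomp Require Import zify.
Set Implicit Arguments. Unset Strict Implicit. Unset Printing Implicit Defensive.
Import Order.TTheory GRing.Theory Num.Theory.
Local Open Scope ring_scope.

Local Notation "x %:F" := (@tofrac _ x).
Local Open Scope quotient_scope.
Section Frac.
Variable R : idomainType.
Lemma pi_ratio (y : {ratio R}) : (\pi_({fraction R}) y)%qT = (frac y).1%:F / (frac y).2%:F.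
Proof.
have d0 := denom_ratioP y.
unlock tofrac.
rewrite /GRing.inv /= /GRing.mul /=.
rewrite -FracField.pi_inv -FracField.pi_mul.
rewrite /FracField.invf /FracField.mulf /= !numden_Ratio ?oner_neq0 //.
rewrite mulr1 mul1r. by rewrite Ratio_numden.

Qed.
Lemma frac_repr (x : {fraction R}) : x = (frac (repr x)).1%:F / (frac (repr x)).2%:F.
Proof. by rewrite -pi_ratio reprK. Qed.
End Frac.

Lemma comp_mpoly_comp (R : comRingType) n k r (lq : k.-tuple {mpoly R[r]})
  (lp : n.-tuple {mpoly R[k]}) (p : {mpoly R[n]}) :
  comp_mpoly lq (comp_mpoly lp p) = comp_mpoly [tuple comp_mpoly lq (tnth lp i) | i < n] p.
Proof.
rewrite [comp_mpoly lp p]comp_mpolyEX [RHS]comp_mpolyEX raddf_sum /=.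
apply: eq_bigr => m _; rewrite comp_mpolyZ !comp_mpolyX rmorph_prod /=.
congr (_ *: _); apply: eq_bigr => i _; by rewrite rmorphXn tnth_mktuple.
Qed.

Definition tup k r (f : nat -> {mpoly rat[r]}) : k.-tuple {mpoly rat[r]} := [tuple f (nat_of_ord m) | m < k].
Definition cmp k r (f : nat -> {mpoly rat[r]}) (p : {mpoly rat[k]}) : {mpoly rat[r]} := comp_mpoly (tup k f) p.
Definition good k r (f : nat -> {mpoly rat[r]}) := forall p : {mpoly rat[k]}, cmp f p = 0 -> p = 0.

Lemma tup_ext k r (f g : nat -> {mpoly rat[r]}) : (forall m, (m < k)%N -> f m = g m) -> tup k f = tup k g.
Proof. by move=> H; apply: eq_from_tnth => i; rewrite !tnth_mktuple H. Qed.

Lemma cmp_ext k r (f g : nat -> {mpoly rat[r]}) (p : {mpoly rat[k]}) : (forall m, (m < k)%N -> f m = g m) -> cmp f p = cmp g p :> {mpoly rat[r]}.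
Proof. by move=> H; rewrite /cmp (tup_ext H). Qed.

Lemma subst_ext k r (f g : nat -> {mpoly rat[r]}) (x : RatFun k) : (forall m, (m < k)%N -> f m = g m) -> subst f x = subst g x.
Proof. move=> H; rewrite /subst. have := tup_ext H. rewrite /tup => ->. by []. Qed.

Lemma cmp_comp j k r (f : nat -> {mpoly rat[r]}) (g : nat -> {mpoly rat[k]}) (p : {mpoly rat[j]}) :
  cmp f (cmp g p) = cmp (fun m => cmp f (g m)) p.
Proof.
rewrite /cmp comp_mpoly_comp; congr comp_mpoly; apply: eq_from_tnth => i.
by rewrite !tnth_mktuple.
Qed.

Lemma var_out k x : (k <= x)%N -> var k x = 0.
Proof. by move=> H; rewrite /var insubN // -leqNgt. Qed.

Lemma var_ord k (i : 'I_k) : var k i = 'X_i.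
Proof. by rewrite /var valK. Qed.

Lemma cmp_var k r (f : nat -> {mpoly rat[r]}) x : (x < k)%N -> cmp f (var k x) = f x.
Proof.
move=> H; have -> : x = Ordinal H by [].
by rewrite var_ord /cmp comp_mpolyXU -(tnth_nth 0) tnth_mktuple.
Qed.

Lemma cmp_id k (p : {mpoly rat[k]}) : cmp (var k) p = p.
Proof.
rewrite /cmp -[RHS](comp_mpoly_id p); congr comp_mpoly.
by apply: eq_from_tnth => i; rewrite !tnth_mktuple var_ord.
Qed.

Lemma good_var k r (g : nat -> nat) (c : nat) :
  (forall m, (m < k)%N -> (g m < r)%N) ->
  (forall m1 m2, (m1 < k)%N -> (m2 < k)%N -> g m1 = g m2 -> m1 = m2) ->
  (forall m, (m < k)%N -> g m != c) ->
  good k (fun m => var r (g m) - var r c).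
Proof.
move=> Hr Hi Hc p Hp.
pose h : nat -> {mpoly rat[k]} := fun x => \sum_(m < k | g m == x) var k m.
have := congr1 (cmp h) Hp; rewrite cmp_comp /cmp raddf0 -/(cmp _ _) => <-.
rewrite -[LHS]cmp_id; apply: cmp_ext => m Hm.
rewrite raddfB /= -/(cmp _ _) -/(cmp _ _) cmp_var ?Hr //.
have -> : cmp h (var r c) = 0.
  case: (ltnP c r) => Hcr; last by rewrite var_out // /cmp raddf0.
  rewrite cmp_var // /h big_pred0 // => i; apply/negP => /eqP E.
  by move: (Hc i (ltn_ord i)); rewrite E eqxx.
rewrite subr0 /h (big_pred1 (Ordinal Hm)) // => i /=.
apply/eqP/eqP => [E|-> //]; apply: val_inj => /=; exact: Hi.
Qed.

Section SubstLemmas.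
Variables k r : nat.
Variable f : nat -> {mpoly rat[r]}.
Hypothesis gf : good k f.

Lemma substE (x : RatFun k) : subst f x = (cmp f (frac (repr x)).1)%:F / (cmp f (frac (repr x)).2)%:F.
Proof. by []. Qed.

Lemma cmp_neq0 (d : {mpoly rat[k]}) : d != 0 -> cmp f d != 0.
Proof. by move=> H; apply/eqP => /gf /eqP; rewrite (negbTE H). Qed.

Lemma cmp_frac_eq (n d n' d' : {mpoly rat[k]}) : d != 0 -> d' != 0 ->
  n%:F / d%:F = n'%:F / d'%:F :> RatFun k ->
  (cmp f n')%:F / (cmp f d')%:F = (cmp f n)%:F / (cmp f d)%:F :> RatFun r.
Proof.
move=> dn0 d'n0 E.
have dF : d%:F != 0 :> RatFun k by rewrite tofrac_eq0.
have d'F : d'%:F != 0 :> RatFun k by rewrite tofrac_eq0.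
have E2 : n * d' = n' * d.
  apply/eqP; rewrite -tofrac_eq !tofracM; apply/eqP.
  have E' : n'%:F = n%:F / d%:F * d'%:F by rewrite E mulfVK.
  by rewrite E' (mulrAC (n%:F / d%:F)) (divfK dF).
have c1 := cmp_neq0 dn0; have c2 := cmp_neq0 d'n0.
have E3 : cmp f n * cmp f d' = cmp f n' * cmp f d by rewrite /cmp -!rmorphM /= E2.
have c1F : (cmp f d)%:F != 0 :> RatFun r by rewrite tofrac_eq0.
have c2F : (cmp f d')%:F != 0 :> RatFun r by rewrite tofrac_eq0.
apply/eqP. Time rewrite (eqr_div _ _ c2F c1F). Time rewrite -!tofracM. Time rewrite E3. done.
Qed.

Lemma subst_frac (n d : {mpoly rat[k]}) : d != 0 ->
  subst f (n%:F / d%:F) = (cmp f n)%:F / (cmp f d)%:F.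
Proof.
move=> dn0.
have E := frac_repr (n%:F / d%:F : RatFun k).
have D := denom_ratioP (repr (n%:F / d%:F : RatFun k)).
move: E D; rewrite substE; case: (frac (repr _)) => n' d' /= E D.
exact: (cmp_frac_eq dn0 D E).
Qed.

Lemma fracP (x : RatFun k) : exists n d, d != 0 /\ x = n%:F / d%:F :> RatFun k.
Proof.
have E := frac_repr x; have D := denom_ratioP (repr x).
move: E D; case: (frac (repr _)) => n d /= E D; by exists n, d.
Qed.

Lemma tofrac_neq0 k' (d : {mpoly rat[k']}) : d != 0 -> d%:F != 0 :> RatFun k'.
Proof. by rewrite tofrac_eq0. Qed.

Lemma cmpD (a b : {mpoly rat[k]}) : cmp f (a + b) = cmp f a + cmp f b. Proof. exact: rmorphD. Qed.
Lemma cmpM (a b : {mpoly rat[k]}) : cmp f (a * b) = cmp f a * cmp f b. Proof. exact: rmorphM. Qed.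

Lemma subst_add (x y : RatFun k) : subst f (x + y) = subst f x + subst f y.
Proof.
have [n1 [d1 [D1 ->]]] := fracP x; have [n2 [d2 [D2 ->]]] := fracP y.
have D12 := mulf_neq0 D1 D2.
rewrite (addf_div _ _ (tofrac_neq0 D1) (tofrac_neq0 D2)) -!tofracM -tofracD.
rewrite !subst_frac // cmpD !cmpM !tofracD !tofracM.
rewrite (addf_div _ _ (tofrac_neq0 (cmp_neq0 D1)) (tofrac_neq0 (cmp_neq0 D2))).
done.
Qed.

Lemma subst_mul (x y : RatFun k) : subst f (x * y) = subst f x * subst f y.
Proof.
have [n1 [d1 [D1 ->]]] := fracP x; have [n2 [d2 [D2 ->]]] := fracP y.
have D12 := mulf_neq0 D1 D2.
rewrite (mulf_div (n1%:F)) -!tofracM.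
rewrite !subst_frac // !cmpM !tofracM.
by rewrite (mulf_div ((cmp f n1)%:F)).
Qed.

Lemma subst0 : subst f (0 : RatFun k) = 0.
Proof.
have -> : (0 : RatFun k) = (0 : {mpoly rat[k]})%:F / (1 : {mpoly rat[k]})%:F by rewrite tofrac0 mul0r.
by rewrite subst_frac ?oner_neq0 // /cmp raddf0 tofrac0 mul0r.
Qed.

Lemma subst_opp (x : RatFun k) : subst f (- x) = - subst f x.
Proof.
apply/eqP; rewrite -subr_eq0 opprK -subst_add.
by rewrite (addrC (- x)) subrr subst0.
Qed.

Lemma subst_sub (x y : RatFun k) : subst f (x - y) = subst f x - subst f y.
Proof. by rewrite subst_add subst_opp. Qed.

Lemma subst_sum (I : Type) (s : seq I) (P : pred I) (F : I -> RatFun k) :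
  subst f (\sum_(i <- s | P i) F i) = \sum_(i <- s | P i) subst f (F i).
Proof.
elim: s => [|a s IH]; first by rewrite !big_nil subst0.
rewrite !big_cons; case: (P a) => //; by rewrite subst_add IH.
Qed.
End SubstLemmas.

Lemma good_comp j k r (f : nat -> {mpoly rat[r]}) (g : nat -> {mpoly rat[k]}) :
  good k f -> good j g -> good j (fun m => cmp f (g m)).
Proof. by move=> gf gg p; rewrite -cmp_comp => /gf /gg. Qed.

Lemma subst_comp j k r (f : nat -> {mpoly rat[r]}) (g : nat -> {mpoly rat[k]}) (x : RatFun j) :
  good k f -> good j g -> subst f (subst g x) = subst (fun m => cmp f (g m)) x.
Proof.
move=> gf gg; have gh := good_comp gf gg.
have [n [d [D ->]]] := fracP x.
rewrite (subst_frac gg _ D) (subst_frac gf _ (cmp_neq0 gg D)) (subst_frac gh _ D).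
by rewrite !cmp_comp.
Qed.


Local Close Scope quotient_scope.

Lemma good_ext k r (f g : nat -> {mpoly rat[r]}) :
  (forall m, (m < k)%N -> f m = g m) -> good k f -> good k g.
Proof. by move=> H gf p; rewrite -(cmp_ext p H) => /gf. Qed.

Lemma good_var0 k r (g : nat -> nat) :
  (forall m, (m < k)%N -> (g m < r)%N) ->
  (forall m1 m2, (m1 < k)%N -> (m2 < k)%N -> g m1 = g m2 -> m1 = m2) ->
  good k (fun m => var r (g m)).
Proof.
move=> H1 H2; apply: (good_ext _ (good_var (c := r) H1 H2 _)).
  by move=> m _; rewrite (var_out (leqnn r)) subr0.
by move=> m Hm; rewrite neq_ltn H1.
Qed.

Section Sums.
Variable V : zmodType.

Lemma rot1_sum r (G : nat -> V) : (0 < r)%N ->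
  \sum_(0 <= k < r) G ((k + 1) %% r)%N = \sum_(0 <= k < r) G k.
Proof.
case: r => // r _.
rewrite big_nat_recr //= big_nat_recl //= addn1 modnn addrC; congr (_ + _).
apply: eq_big_nat => k /andP [_ Hk]; rewrite modn_small ?addn1 //; lia.
Qed.

Lemma rot_sum r c (F : nat -> V) : (0 < r)%N ->
  \sum_(0 <= k < r) F ((k + c) %% r)%N = \sum_(0 <= k < r) F k.
Proof.
move=> Hr; elim: c => [|c IH].
  by apply: eq_big_nat => k /andP [_ Hk]; rewrite addn0 modn_small.
rewrite -[RHS]IH -(rot1_sum (fun k => F ((k + c) %% r)%N) Hr).
apply: eq_big_nat => k _; congr F; rewrite modnDml; congr (_ %% r)%N; lia.
Qed.

Lemma pairs_sum r (F : nat -> nat -> V) :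
  \sum_(0 <= j < r) \sum_(0 <= i < j) F i j =
  \sum_(1 <= l < r) \sum_(0 <= i < r - l) F i (i + l)%N.
Proof.
elim: r => [|r IH]; first by rewrite !big_geq.
case: (posnP r) => [->|rpos]; first by rewrite big_nat1 !big_geq.
rewrite big_nat_recr //= IH.
have E1 : forall l, (1 <= l < r.+1)%N -> \sum_(0 <= i < r.+1 - l) F i (i + l)%N =
   \sum_(0 <= i < r - l) F i (i + l)%N + F (r - l)%N r.
  move=> l /andP [H1 H2]; rewrite subSn // big_nat_recr //= subnK //.
rewrite (eq_big_nat _ _ E1) big_split /=.
have -> : \sum_(1 <= l < r.+1) \sum_(0 <= i < r - l) F i (i + l)%N =
          \sum_(1 <= l < r) \sum_(0 <= i < r - l) F i (i + l)%N.
  by rewrite big_nat_recr //= subnn (big_geq (leqnn 0)) addr0.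
congr (_ + _).
rewrite big_add1 /= [LHS]big_nat_rev /=.
apply: eq_big_nat => i /andP [_ Hi]; congr F; lia.
Qed.
End Sums.

Lemma modn_eq_add (U V r : nat) : U = (V + r)%N -> (U %% r = V %% r)%N.
Proof. by move=> ->; rewrite modnDr. Qed.

Lemma mod_inj r c m1 m2 : (m1 < r)%N -> (m2 < r)%N -> ((m1 + c) %% r = (m2 + c) %% r)%N -> m1 = m2.
Proof.
move=> H1 H2 /eqP; rewrite eqn_modDr !modn_small //; by move/eqP.
Qed.

Definition rotf r k : nat -> {mpoly rat[r]} := fun m => var r ((m + k) %% r).

Lemma good_rot r k : (0 < r)%N -> good r (rotf r k).
Proof.
move=> Hr; apply: good_var0 => [m _|m1 m2 H1 H2]; first by rewrite ltn_pmod.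
exact: mod_inj.
Qed.

Lemma good_shift r c k : (k <= r)%N -> good k (fun m => var r ((c + m) %% r)).
Proof.
move=> Hk; apply: good_var0 => [m Hm|m1 m2 H1 H2 E]; first by rewrite ltn_pmod //; lia.
apply: (@mod_inj r c); try lia. by rewrite addnC E addnC.
Qed.

Lemma cmp_rot r k x : (x < r)%N -> cmp (rotf r k) (var r x) = var r ((x + k) %% r).
Proof. by move=> H; rewrite cmp_var. Qed.

Lemma cmpB k r (f : nat -> {mpoly rat[r]}) (a b : {mpoly rat[k]}) : cmp f (a - b) = cmp f a - cmp f b.
Proof. exact: raddfB. Qed.

Lemma good_id k r : (k <= r)%N -> good k (fun m => var r m).
Proof. move=> H; apply: (@good_var0 k r id) => //= m Hm; lia. Qed.

Lemma good_plus k r i : (i + k <= r)%N -> good k (fun m => var r (i + m)).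
Proof. move=> H; apply: (@good_var0 k r (fun m => i + m)%N) => //= m1; try lia. Qed.

Definition M (A B : mould) r k i : RatFun r :=
  subst (fun m => var r ((m + k) %% r)) (A i) * subst (fun m => var r ((i + m + k) %% r)) (B (r - i)%N).

Lemma mu_rot A B r k : (0 < r)%N ->
  subst (rotf r k) (mu A B r) = \sum_(0 <= i < r.+1) M A B r k i.
Proof.
move=> Hr; rewrite /mu (subst_sum (@good_rot r k Hr)) [in RHS]big_mkord; apply: eq_bigr => i _.
rewrite (subst_mul (@good_rot r k Hr)).
have Hi : (i <= r)%N by rewrite -ltnS.
have Hi' : (i + (r - i) <= r)%N by rewrite subnKC.
rewrite (subst_comp _ (@good_rot r k Hr) (good_id Hi)) (subst_comp _ (@good_rot r k Hr) (good_plus Hi')).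
congr (_ * _); apply: subst_ext => m Hm; rewrite cmp_rot //; lia.
Qed.

Lemma good0 r (f : nat -> {mpoly rat[r]}) : good 0 f.
Proof.
apply: (good_ext (f := fun m => var r ((fun _ => 0%N) m))) => [m|]; first by [].
by apply: good_var0.
Qed.

Lemma M0 A B r k : A 0%N = 0 -> M A B r k 0 = 0.
Proof. by move=> H; rewrite /M H (subst0 (@good0 r _)) mul0r. Qed.

Lemma Mr A B r k : B 0%N = 0 -> M A B r k r = 0.
Proof. by move=> H; rewrite /M subnn H (subst0 (@good0 r _)) mulr0. Qed.

Lemma mu_rot_sum A B r : A 0%N = 0 -> B 0%N = 0 -> (0 < r)%N ->
  \sum_(0 <= k < r) subst (rotf r k) (mu A B r) =
  \sum_(0 <= k < r) \sum_(1 <= i < r) M A B r k i.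
Proof.
move=> HA HB Hr; apply: eq_big_nat => k _; rewrite mu_rot //.
by rewrite big_ltn // big_nat_recr //= Mr // M0 // add0r addr0.
Qed.

Lemma M_swap A B r k i : (0 < r)%N -> (i <= r)%N ->
  M A B r ((k + i) %% r) (r - i) = M B A r k i.
Proof.
move=> Hr Hi; rewrite /M subKn // mulrC; congr (_ * _); apply: subst_ext => m Hm.
  by rewrite modnDmr; congr (var r _); apply: modn_eq_add; lia.
rewrite modnDmr; congr (var r _); congr (_ %% r)%N; lia.
Qed.

Lemma lu_circ A B r : A 0%N = 0 -> B 0%N = 0 -> (0 < r)%N ->
  \sum_(0 <= k < r) subst (rotf r k) (lu A B r) = 0.
Proof.
move=> HA HB Hr.
under eq_bigr do rewrite /lu (subst_sub (@good_rot r _ Hr)).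
rewrite sumrB !mu_rot_sum //; apply/eqP; rewrite subr_eq0; apply/eqP.
rewrite exchange_big_nat [RHS]exchange_big_nat /=.
rewrite [RHS]big_nat_rev /=.
apply: eq_big_nat => i /andP [H1 H2].
rewrite -[LHS](rot_sum (r - i)) //.
apply: eq_big_nat => k /andP [_ Hk].
have -> : (1 + r - i.+1 = r - i)%N by lia.
rewrite -M_swap //; last by lia.
congr M; rewrite modnDml (@modn_eq_add _ k) ?modn_small //; lia.
Qed.

Definition alph (i j m : nat) : nat := if (m < i)%N then m else (j + (m - i))%N.

Definition Tg (A B : mould) r k i j c : RatFun r :=
  subst (fun m => var r ((alph i j m + k) %% r)) (A (r - (j - i))%N) *
  subst (fun m => var r ((i + m + k) %% r) - var r ((c + k) %% r)) (B (j - i)%N).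

Lemma good_alpha r i j : (i <= j <= r)%N ->
  good (r - (j - i)) (fun m => if (m < i)%N then var r m else var r (j + (m - i))).
Proof.
move=> /andP [H1 H2].
apply: (good_ext (f := fun m => var r (alph i j m))).
  by move=> m _; rewrite /alph; case: ifP.
apply: good_var0 => [m Hm|m1 m2 Hm1 Hm2]; rewrite /alph.
  case: (ltnP m i) => H; lia.
case: (ltnP m1 i); case: (ltnP m2 i); lia.
Qed.

Lemma good_beta r i j c : (j <= r)%N -> (c < i \/ j <= c)%N ->
  good (j - i) (fun m => var r (i + m) - var r c).
Proof.
move=> H1 H2; apply: (@good_var (j - i) r (fun m => i + m)%N c) => [m Hm|m1 m2 _ _|m Hm]; try lia.
Qed.

Lemma T_rot A B r k i j c : (0 < r)%N -> (i <= j)%N -> (j <= r)%N -> (c < r)%N -> (c < i \/ j <= c)%N ->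
  subst (rotf r k) (subst (fun m => if (m < i)%N then var r m else var r (j + (m - i))) (A (r - (j - i))%N)
    * subst (fun m => var r (i + m) - var r c) (B (j - i)%N)) = Tg A B r k i j c.
Proof.
move=> Hr H1 H2 Hc H3.
have ga : good (r - (j - i)) (fun m => if (m < i)%N then var r m else var r (j + (m - i))).
  by apply: good_alpha; rewrite H1 H2.
have gb := good_beta H2 H3.
rewrite (subst_mul (@good_rot r k Hr)) (subst_comp _ (@good_rot r k Hr) ga).
rewrite (subst_comp _ (@good_rot r k Hr) gb); congr (_ * _); apply: subst_ext => m Hm.
  rewrite /alph; case: ifP => Hmi; rewrite cmp_rot //; lia.
rewrite cmpB !cmp_rot //; lia.
Qed.

Lemma sum_anit_shape (V : zmodType) r (G : nat -> nat -> V) :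
  \sum_(j < r.+1) \sum_(i < j | (0 < i)%N) G (i : nat) (j : nat) =
  \sum_(0 <= j < r) \sum_(0 <= i < j) G i.+1 j.+1.
Proof.
rewrite big_ord_recl big_pred0 ?add0r; last by case.
rewrite [in RHS]big_mkord; apply: eq_bigr => j _.
rewrite -(big_mkord (fun i => 0 < i)%N (fun i => G i (lift ord0 j))) lift0.
by rewrite big_mkcond big_nat_recl //= add0r.
Qed.

Lemma sum_amit_shape (V : zmodType) r (G : nat -> nat -> V) :
  \sum_(j < r) \sum_(i < j) G (i : nat) (j : nat) =
  \sum_(0 <= j < r) \sum_(0 <= i < j) G i j.
Proof.
rewrite [in RHS]big_mkord; apply: eq_bigr => j _.
by rewrite -(big_mkord xpredT (fun i => G i j)).
Qed.

Definition Gterm (A B : mould) r (c : nat -> nat -> nat) (i j : nat) : RatFun r :=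
  subst (fun m => if (m < i)%N then var r m else var r (j + (m - i))) (A (r - (j - i))%N)
    * subst (fun m => var r (i + m) - var r (c i j)) (B (j - i)%N).

Lemma amit_rot A B r k : (0 < r)%N ->
  subst (rotf r k) (amit B A r) = \sum_(0 <= j < r) \sum_(0 <= i < j) Tg A B r k i j j.
Proof.
move=> Hr.
have -> : amit B A r = \sum_(j < r) \sum_(i < j) Gterm A B r (fun i j => j) i j by [].
rewrite sum_amit_shape (subst_sum (@good_rot r k Hr)).
apply: eq_big_nat => j /andP [_ Hj]; rewrite (subst_sum (@good_rot r k Hr)).
apply: eq_big_nat => i /andP [_ Hi]; apply: T_rot => //.
- exact: ltnW.
- exact: ltnW.
- by right.
Qed.

Lemma anit_rot A B r k : (0 < r)%N ->
  subst (rotf r k) (anit B A r) = \sum_(0 <= j < r) \sum_(0 <= i < j) Tg A B r k i.+1 j.+1 i.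
Proof.
move=> Hr.
have -> : anit B A r = \sum_(j < r.+1) \sum_(i < j | (0 < i)%N) Gterm A B r (fun i j => i.-1) i j by [].
rewrite sum_anit_shape (subst_sum (@good_rot r k Hr)).
apply: eq_big_nat => j /andP [_ Hj]; rewrite (subst_sum (@good_rot r k Hr)).
apply: eq_big_nat => i /andP [_ Hi]; apply: T_rot => //=.
- by apply: ltnW.
- by apply: (ltn_trans Hi).
- by left.
Qed.

Definition tau r l p : nat -> {mpoly rat[r]} := fun m => var r ((p + l + m) %% r).
Definition Yf r p c : nat -> {mpoly rat[r]} := fun m => var r ((p + m) %% r) - var r (c %% r).

Lemma TA A B r l i p : (0 < l)%N -> (i < r - l)%N ->
  Tg A B r ((p + (r - i)) %% r) i (i + l) (i + l) =
  subst (tau r l p) (subst (rotf (r - l) (r - l - i)) (A (r - l)%N)) * subst (Yf r p (p + l)) (B l).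
Proof.
move=> Hl Hi.
have Hs : (0 < r - l)%N by lia.
rewrite /Tg addKn; congr (_ * _).
  rewrite (subst_comp _ (@good_shift r (p + l) (r - l) (leq_subr _ _)) (@good_rot (r - l) (r - l - i) Hs)).
  apply: subst_ext => m Hm; rewrite cmp_var ?ltn_pmod //; congr (var r _); rewrite /alph.
  case: (ltnP m i) => Hmi.
    rewrite (@modn_small (m + (r - l - i))); last by lia.
    rewrite modnDmr; congr (_ %% r)%N; lia.
  rewrite (_ : (m + (r - l - i)) = (m - i) + (r - l))%N; last by lia.
  rewrite modnDr (@modn_small (m - i)); last by lia.
  rewrite modnDmr; apply: modn_eq_add; lia.
apply: subst_ext => m Hm; rewrite /Yf; congr (var r _ - var r _); rewrite modnDmr.
  apply: modn_eq_add; lia.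
apply: modn_eq_add; lia.
Qed.

Lemma TN A B r l i p : (0 < l)%N -> (i < r - l)%N ->
  Tg A B r ((p + (r - i.+1)) %% r) i.+1 (i + l).+1 i =
  subst (tau r l p) (subst (rotf (r - l) (r - l - i.+1)) (A (r - l)%N)) * subst (Yf r p (p + (r - 1))) (B l).
Proof.
move=> Hl Hi.
have Hs : (0 < r - l)%N by lia.
rewrite /Tg subSS addKn; congr (_ * _).
  rewrite (subst_comp _ (@good_shift r (p + l) (r - l) (leq_subr _ _)) (@good_rot (r - l) (r - l - i.+1) Hs)).
  apply: subst_ext => m Hm; rewrite cmp_var ?ltn_pmod //; congr (var r _); rewrite /alph.
  case: (ltnP m i.+1) => Hmi.
    rewrite (@modn_small (m + (r - l - i.+1))); last by lia.
    rewrite modnDmr; congr (_ %% r)%N; lia.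
  rewrite (_ : (m + (r - l - i.+1)) = (m - i.+1) + (r - l))%N; last by lia.
  rewrite modnDr (@modn_small (m - i.+1)); last by lia.
  rewrite modnDmr; apply: modn_eq_add; lia.
apply: subst_ext => m Hm; rewrite /Yf; congr (var r _ - var r _); rewrite modnDmr.
  apply: modn_eq_add; lia.
congr (_ %% r)%N; lia.
Qed.

Lemma good_tau r l p : good (r - l) (tau r l p).
Proof. exact: (@good_shift r (p + l) (r - l) (leq_subr _ _)). Qed.

Lemma amit_l A B r l : (0 < l)%N -> (l < r)%N ->
  \sum_(0 <= i < r - l) \sum_(0 <= k < r) Tg A B r k i (i + l) (i + l) =
  \sum_(0 <= p < r) subst (tau r l p) (\sum_(0 <= i < r - l) subst (rotf (r - l) (r - l - i)) (A (r - l)%N))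
     * subst (Yf r p (p + l)) (B l).
Proof.
move=> Hl Hr.
have Hr0 : (0 < r)%N by lia.
transitivity (\sum_(0 <= i < r - l) \sum_(0 <= p < r)
  subst (tau r l p) (subst (rotf (r - l) (r - l - i)) (A (r - l)%N)) * subst (Yf r p (p + l)) (B l)).
  apply: eq_big_nat => i /andP [_ Hi]; rewrite -(rot_sum (r - i)) //.
  by apply: eq_big_nat => p _; rewrite TA.
rewrite exchange_big_nat; apply: eq_big_nat => p _.
by rewrite (subst_sum (@good_tau r l p)) mulr_suml.
Qed.

Lemma anit_l A B r l : (0 < l)%N -> (l < r)%N ->
  \sum_(0 <= i < r - l) \sum_(0 <= k < r) Tg A B r k i.+1 (i + l).+1 i =
  \sum_(0 <= p < r) subst (tau r l p) (\sum_(0 <= i < r - l) subst (rotf (r - l) (r - l - i.+1)) (A (r - l)%N))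
     * subst (Yf r p (p + (r - 1))) (B l).
Proof.
move=> Hl Hr.
have Hr0 : (0 < r)%N by lia.
transitivity (\sum_(0 <= i < r - l) \sum_(0 <= p < r)
  subst (tau r l p) (subst (rotf (r - l) (r - l - i.+1)) (A (r - l)%N)) * subst (Yf r p (p + (r - 1))) (B l)).
  apply: eq_big_nat => i /andP [_ Hi]; rewrite -(rot_sum (r - i.+1)) //.
  by apply: eq_big_nat => p _; rewrite TN.
rewrite exchange_big_nat; apply: eq_big_nat => p _.
by rewrite (subst_sum (@good_tau r l p)) mulr_suml.
Qed.

Lemma Asum1 (A : mould) s : (1 < s)%N -> circ_neutral A ->
  \sum_(0 <= i < s) subst (rotf s (s - i)) (A s) = 0.
Proof.
move=> Hs cA; have H := cA s Hs.
rewrite -(big_mkord xpredT (fun i => subst (rotf s i) (A s))) in H.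
have Hs0 : (0 < s)%N by lia.
rewrite big_nat_rev /= -[RHS]H -[RHS](rot1_sum _ Hs0).
apply: eq_big_nat => i /andP [_ Hi]; apply: subst_ext => m Hm.
rewrite /rotf modnDmr; congr (var s _); congr (_ %% s)%N; lia.
Qed.

Lemma Asum2 (A : mould) s : (1 < s)%N -> circ_neutral A ->
  \sum_(0 <= i < s) subst (rotf s (s - i.+1)) (A s) = 0.
Proof.
move=> Hs cA; have H := cA s Hs.
rewrite -(big_mkord xpredT (fun i => subst (rotf s i) (A s))) in H.
rewrite big_nat_rev /= -[RHS]H.
apply: eq_big_nat => i /andP [_ Hi]; congr (subst (rotf s _) _); lia.
Qed.

Lemma arit_circ A B r : circ_neutral A -> (1 < r)%N ->
  \sum_(0 <= k < r) subst (rotf r k) (arit B A r) = 0.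
Proof.
move=> cA Hr.
have Hr0 : (0 < r)%N by lia.
under eq_bigr do rewrite /arit (subst_sub (@good_rot r _ Hr0)) amit_rot // anit_rot //.
rewrite sumrB.
have E1 : \sum_(0 <= k < r) \sum_(0 <= j < r) \sum_(0 <= i < j) Tg A B r k i j j =
   \sum_(1 <= l < r) \sum_(0 <= i < r - l) \sum_(0 <= k < r) Tg A B r k i (i + l) (i + l).
  rewrite exchange_big_nat.
  under eq_big_nat => j _ do rewrite exchange_big_nat /=.
  exact: (pairs_sum r (fun i j => \sum_(0 <= k < r) Tg A B r k i j j)).
have E2 : \sum_(0 <= k < r) \sum_(0 <= j < r) \sum_(0 <= i < j) Tg A B r k i.+1 j.+1 i =
   \sum_(1 <= l < r) \sum_(0 <= i < r - l) \sum_(0 <= k < r) Tg A B r k i.+1 (i + l).+1 i.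
  rewrite exchange_big_nat.
  under eq_big_nat => j _ do rewrite exchange_big_nat /=.
  exact: (pairs_sum r (fun i j => \sum_(0 <= k < r) Tg A B r k i.+1 j.+1 i)).
rewrite E1 E2; apply/eqP; rewrite subr_eq0; apply/eqP.
apply: eq_big_nat => l /andP [Hl Hlr]; rewrite amit_l // anit_l //.
case: (ltnP l (r - 1)) => Hl'.
  rewrite Asum1 // ?Asum2 //; try lia.
  by apply: eq_big_nat => p _; rewrite !(subst0 (@good_tau r l p)) !mul0r.
have Hs : (r - l = 1)%N by lia.
rewrite Hs; apply: eq_big_nat => p _; rewrite !big_nat1.
congr (_ * _).
  by congr (subst _ _); apply: subst_ext => m Hm; rewrite /rotf !modn1.
congr (subst (Yf r p _) _); lia.
Qed.

Theorem lemma21 (A B : mould) :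
  in_ARI A -> in_ARI B -> circ_neutral A -> circ_neutral B ->
  in_ARI (ari A B) /\ circ_neutral (ari A B).
Proof.
move=> HA HB cA cB; split.
  rewrite /in_ARI /ari /arit /lu.
  have am : forall X Y : mould, amit X Y 0 = 0.
    by move=> X Y; rewrite /amit big_ord0.
  have an : forall X Y : mould, anit X Y 0 = 0.
    move=> X Y.
    have -> : anit X Y 0 = \sum_(j < 1) \sum_(i < j | (0 < i)%N) Gterm Y X 0 (fun i j => i.-1) i j by [].
    by rewrite sum_anit_shape big_geq.
  have mu0 : forall X Y : mould, X 0%N = 0 -> mu X Y 0 = 0.
    move=> X Y HX; rewrite /mu big_ord_recl big_ord0 addr0 /=.
    by rewrite HX (subst0 (@good0 0 _)) mul0r.
  by rewrite !am !an !mu0 // !subrr addr0.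
move=> r Hr.
have Hr0 : (0 < r)%N by lia.
rewrite -(big_mkord xpredT (fun i => subst (rotf r i) (ari A B r))).
under eq_bigr do rewrite /ari (subst_add (@good_rot r _ Hr0)) (subst_sub (@good_rot r _ Hr0)).
rewrite big_split sumrB /= arit_circ // arit_circ // lu_circ //.
by rewrite subrr add0r.
Qed.
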